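(* Let $A\in B_\infty(L)$ with $A^T=A$, let $\{e_j\}_{j\in\mathbb N}$ be a complete orthonormal system in $L$, and $\Delta_M(A):=\sum_{j=1}^M a(Ae_j)a(\bar e_j)$. If the operators $\Delta_M(A)$ converge strongly on all of $\mathcal F^{(2)}$ as $M\to\infty$, then $A\in B_2(L)$.
   Context: $L$ is a separable complex Hilbert space with $\dim L=\infty$, scalar product antilinear in the first argument, and a conjugation $J:f\mapsto\bar f$ (antilinear involution with $(\bar f,\bar g)=(g,f)$); for bounded $A$, $\bar A:=JAJ$ and $A^T:=(\bar A)^*$. $B_\infty(L)$ and $B_2(L)$ denote the bounded and the Hilbert–Schmidt operators on $L$. $\mathcal F$ carries a Fock representation of the CCR over $L$: on a dense invariant domain $D$ there are operators $a(f),a^\dagger(f)$, linear in $f$, with $[a(f),a(g)]=0=[a^\dagger(f),a^\dagger(g)]$, $[a(f),a^\dagger(g)]=(\bar f,g)\mathrm{id}$, $(a(f)\Phi,\Psi)=(\Phi,a^\dagger(\bar f)\Psi)$, a unit vacuum $\Omega$ with $a(f)\Omega=0$, and $\mathcal F$ is the closure of the span of all vectors $a^\dagger(f_n)\cdots a^\dagger(f_1)\Omega$. $\mathcal F^{(2)}$ is the closure of $\operatorname{span}\{a^\dagger(f_2)a^\dagger(f_1)\Omega\}$; $a(f),a^\dagger(f)$ extend to bounded operators between the closed $n$-particle spaces, which are used. *)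

(* Defs.v *)
From HB Require Import structures.
From mathcomp Require Import all_boot all_order all_algebra.
From mathcomp Require Import complex.
From mathcomp Require Import reals.

Set Implicit Arguments.
Unset Strict Implicit.
Unset Printing Implicit Defensive.

Import Order.TTheory GRing.Theory Num.Theory.
Local Open Scope ring_scope.

Section Hilbert.
Variables (R : realType) (V : lmodType R[i]).

Definition ipnorm (ip : V -> V -> R[i]) (x : V) : R := Num.sqrt (complex.Re (ip x x)).

Definition ip_cvg_to (ip : V -> V -> R[i]) (u : nat -> V) (l : V) : Prop :=
  forall eps : R, 0 < eps -> exists N : nat,
    forall n : nat, (N <= n)%N -> ipnorm ip (u n - l) < eps.

Definition ip_cauchy (ip : V -> V -> R[i]) (u : nat -> V) : Prop :=
  forall eps : R, 0 < eps -> exists N : nat,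
    forall m n : nat, (N <= m)%N -> (N <= n)%N -> ipnorm ip (u m - u n) < eps.

Record is_hilbert (ip : V -> V -> R[i]) : Prop := {
  ip_linr : forall (c : R[i]) (x y z : V), ip x (c *: y + z) = c * ip x y + ip x z;
  ip_herm : forall x y : V, ip y x = conjc (ip x y);
  ip_ge0 : forall x : V, 0 <= ip x x;
  ip_def : forall x : V, ip x x = 0 -> x = 0;
  ip_complete : forall u : nat -> V, ip_cauchy ip u -> exists l : V, ip_cvg_to ip u l
}.

Definition in_span (S : V -> Prop) (x : V) : Prop :=
  exists s : seq (R[i] * V), (forall p, p \in s -> S p.2) /\
    x = \sum_(p <- s) p.1 *: p.2.

Definition in_closure (ip : V -> V -> R[i]) (P : V -> Prop) (x : V) : Prop :=
  forall eps : R, 0 < eps -> exists y : V, P y /\ ipnorm ip (x - y) < eps.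

Definition is_dense (ip : V -> V -> R[i]) (P : V -> Prop) : Prop :=
  forall x : V, in_closure ip P x.

Definition is_subspace (P : V -> Prop) : Prop :=
  P 0 /\ forall (c : R[i]) (x y : V), P x -> P y -> P (c *: x + y).

Definition linear_on (W : lmodType R[i]) (P : V -> Prop) (T : V -> W) : Prop :=
  forall (c : R[i]) (x y : V), P x -> P y -> T (c *: x + y) = c *: T x + T y.

Definition bounded_on (ip : V -> V -> R[i]) (P : V -> Prop) (T : V -> V) : Prop :=
  linear_on P T /\
  exists K : R, forall x : V, P x -> ipnorm ip (T x) <= K * ipnorm ip x.

Definition bounded_op (ip : V -> V -> R[i]) (T : V -> V) : Prop :=
  bounded_on ip (fun _ => True) T.

Definition is_adjoint (ip : V -> V -> R[i]) (T Ts : V -> V) : Prop :=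
  forall f g : V, ip (Ts f) g = ip f (T g).

Definition is_conjugation (ip : V -> V -> R[i]) (J : V -> V) : Prop :=
  (forall (c : R[i]) (x y : V), J (c *: x + y) = conjc c *: J x + J y) /\
  (forall x : V, J (J x) = x) /\
  (forall f g : V, ip (J f) (J g) = ip g f).

(* A^T = A, where  A^T := (bar A)^*  and  bar A := J A J *)
Definition is_symmetric (ip : V -> V -> R[i]) (J A : V -> V) : Prop :=
  is_adjoint ip (fun x => J (A (J x))) A.

Definition complete_ONS (ip : V -> V -> R[i]) (e : nat -> V) : Prop :=
  (forall i j : nat, ip (e i) (e j) = (i == j)%:R) /\
  (forall f : V, (forall j : nat, ip (e j) f = 0) -> f = 0).

Definition hilbert_schmidt (ip : V -> V -> R[i]) (A : V -> V) : Prop :=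
  exists u : nat -> V, complete_ONS ip u /\
  exists s : R, forall eps : R, 0 < eps -> exists N : nat, forall M : nat,
    (N <= M)%N -> `| \sum_(j < M) (ipnorm ip (A (u j))) ^+ 2 - s | < eps.

End Hilbert.

Section Fock.
Variables (R : realType) (L F : lmodType R[i]).
Variables (ipL : L -> L -> R[i]) (ipF : F -> F -> R[i]) (J : L -> L).
Variables (a ad : L -> F -> F) (Omega : F).

(* a^dagger(f_n) ... a^dagger(f_1) Omega  for  fs = [:: f_n; ...; f_1] *)
Definition fockvec (fs : seq L) : F := foldr (fun f x => ad f x) Omega fs.

Definition npart (n : nat) (x : F) : Prop :=
  in_closure ipF (in_span (fun y => exists fs : seq L, size fs = n /\ y = fockvec fs)) x.

Record is_fock_rep (D : F -> Prop) : Prop := {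
  D_sub : is_subspace D;
  D_dense : is_dense ipF D;
  D_a : forall f x, D x -> D (a f x);
  D_ad : forall f x, D x -> D (ad f x);
  a_linf : forall (c : R[i]) f g x, D x -> a (c *: f + g) x = c *: a f x + a g x;
  ad_linf : forall (c : R[i]) f g x, D x -> ad (c *: f + g) x = c *: ad f x + ad g x;
  a_linx : forall f, linear_on D (a f);
  ad_linx : forall f, linear_on D (ad f);
  ccr_aa : forall f g x, D x -> a f (a g x) = a g (a f x);
  ccr_adad : forall f g x, D x -> ad f (ad g x) = ad g (ad f x);
  ccr_aad : forall f g x, D x -> a f (ad g x) - ad g (a f x) = ipL (J f) g *: x;
  a_adj : forall f x y, D x -> D y -> ipF (a f x) y = ipF x (ad (J f) y);
  Omega_D : D Omega;
  Omega_unit : ipF Omega Omega = 1;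
  a_Omega : forall f, a f Omega = 0;
  fock_cyclic : is_dense ipF (in_span (fun y => exists fs : seq L, y = fockvec fs));
  (* a(f), a^dagger(f) act as bounded operators between the closed
     n-particle spaces (these extensions are the ones used) *)
  a_npart : forall f n x, npart n.+1 x -> npart n (a f x);
  ad_npart : forall f n x, npart n x -> npart n.+1 (ad f x);
  a_bdd : forall f n, bounded_on ipF (npart n.+1) (a f);
  ad_bdd : forall f n, bounded_on ipF (npart n) (ad f)
}.

(* Delta_M(A) = sum_{j=1}^M a(A e_j) a(bar e_j)  (e indexed from 0 here) *)
Definition DeltaM (A : L -> L) (e : nat -> L) (M : nat) (x : F) : F :=
  \sum_(j < M) a (A (e j)) (a (J (e j)) x).

End Fock.

(* Main.v *)
Require Import Defs.
From HB Require Import structures.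
From mathcomp Require Import all_boot all_order all_algebra.
From mathcomp Require Import complex.
From mathcomp Require Import reals.
From mathcomp Require Import ring lra.
From mathcomp Require Import classical_sets boolp.
From Stdlib Require Import Classical ClassicalEpsilon.
Import Order.TTheory GRing.Theory Num.Theory.
Local Open Scope ring_scope.

Module Aux.
Local Open Scope complex_scope.
Set Implicit Arguments.
Unset Strict Implicit.


Lemma mono_cvg (R : realType) (T : nat -> R) (B : R) :
  (forall n, T n <= T n.+1) -> (forall n, T n <= B) ->
  exists s, (forall n, T n <= s) /\
    forall eps, 0 < eps -> exists N, forall n, (N <= n)%N -> s - eps < T n.
Proof.
move=> Tinc TB.
have Tmono : {homo T : m n / (m <= n)%N >-> m <= n}.
  by apply: homo_leq => //; exact: le_trans.
pose E : set R := fun x => exists n, x = T n.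
have hs : has_sup E.
  split; first by exists (T 0%N), 0%N.
  by exists B => _ [n ->]; exact: TB.
exists (sup E); split.
  by move=> n; apply: sup_upper_bound => //; exists n.
move=> eps eps0; have [x [N ->] hx] := sup_adherent eps0 hs.
exists N => n Nn; exact: (lt_le_trans hx (Tmono _ _ Nn)).
Qed.



Lemma sum_delta (K : nzRingType) a b m (f : nat -> K) :
  \sum_(a <= l < b) (m == l)%:R * f l = ((a <= m)%N && (m < b)%N)%:R * f m.
Proof.
case hm: ((a <= m)%N && (m < b)%N).
  rewrite (bigD1_seq m) ?mem_index_iota ?iota_uniq //= eqxx mul1r big1 ?addr0 //.
  by move=> i /negbTE; rewrite eq_sym => ->; rewrite mul0r.
rewrite mul0r big_seq big1 // => i; rewrite mem_index_iota => hi.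
by case: eqP hi hm => [->->//|_ _ _]; rewrite mul0r.
Qed.

Lemma lt_all_le0 (R : realType) (a : R) : (forall eps, 0 < eps -> a < eps) -> a <= 0.
Proof.
move=> h; rewrite leNgt; apply/negP => a0; have := h a a0; by rewrite ltxx.
Qed.


Section IP.
Variables (R : realType) (V : lmodType R[i]) (ip : V -> V -> R[i]).
Hypothesis H : is_hilbert ip.

Lemma ip0r x : ip x 0 = 0.
Proof.
have := ip_linr H 1 x 0 0; rewrite scale1r addr0 mul1r => h.
by apply/(addrI (ip x 0)); rewrite addr0 -h.
Qed.

Lemma ipDr x y z : ip x (y + z) = ip x y + ip x z.
Proof. by have := ip_linr H 1 x y z; rewrite scale1r mul1r. Qed.

Lemma ipZr c x y : ip x (c *: y) = c * ip x y.
Proof. by have := ip_linr H c x y 0; rewrite !addr0 ip0r addr0. Qed.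

Lemma ipNr x y : ip x (- y) = - ip x y.
Proof. by rewrite -scaleN1r ipZr mulN1r. Qed.

Lemma ipBr x y z : ip x (y - z) = ip x y - ip x z.
Proof. by rewrite ipDr ipNr. Qed.

Lemma ip_sumr x (I : Type) (r : seq I) (P : pred I) (f : I -> V) :
  ip x (\sum_(i <- r | P i) f i) = \sum_(i <- r | P i) ip x (f i).
Proof.
elim: r => [|j r IH]; first by rewrite !big_nil ip0r.
by rewrite !big_cons; case: (P j); rewrite ?ipDr IH.
Qed.

Lemma ipC x y : ip x y = conjc (ip y x).
Proof. exact: ip_herm. Qed.

Lemma ip0l x : ip 0 x = 0.
Proof. by rewrite ipC ip0r conjc0. Qed.

Lemma ipDl x y z : ip (x + y) z = ip x z + ip y z.
Proof. by rewrite ipC ipDr rmorphD [ip x z]ipC [ip y z]ipC. Qed.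

Lemma ipZl c x y : ip (c *: x) y = conjc c * ip x y.
Proof. by rewrite ipC ipZr rmorphM [ip x y]ipC. Qed.

Lemma ipNl x y : ip (- x) y = - ip x y.
Proof. by rewrite -scaleN1r ipZl rmorphN rmorph1 mulN1r. Qed.

Lemma ipBl x y z : ip (x - y) z = ip x z - ip y z.
Proof. by rewrite ipDl ipNl. Qed.

Lemma ip_suml x (I : Type) (r : seq I) (P : pred I) (f : I -> V) :
  ip (\sum_(i <- r | P i) f i) x = \sum_(i <- r | P i) ip (f i) x.
Proof.
elim: r => [|j r IH]; first by rewrite !big_nil ip0l.
by rewrite !big_cons; case: (P j); rewrite ?ipDl IH.
Qed.

Definition nrm2 x := complex.Re (ip x x).

Lemma real_ge0 (z : R[i]) : 0 <= z -> z = (complex.Re z)%:C.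
Proof. by move=> /ger0_Im; case: z => a b /= ->. Qed.

Lemma ipxx x : ip x x = (nrm2 x)%:C.
Proof. exact/real_ge0/ip_ge0. Qed.

Lemma nrm2_ge0 x : 0 <= nrm2 x.
Proof. by have := ip_ge0 H x; rewrite ipxx lecR. Qed.

Lemma nrm2_eq0 x : nrm2 x = 0 -> x = 0.
Proof. by move=> h; apply: (ip_def H); rewrite ipxx h. Qed.

Lemma sqr_ipnorm x : ipnorm ip x ^+ 2 = nrm2 x.
Proof. exact/sqr_sqrtr/nrm2_ge0. Qed.

Lemma ipnorm_ge0 x : 0 <= ipnorm ip x.
Proof. exact: sqrtr_ge0. Qed.

Lemma ipnorm0 : ipnorm ip 0 = 0.
Proof. by rewrite /ipnorm ip0r sqrtr0. Qed.

Lemma ipnorm_eq0 x : ipnorm ip x = 0 -> x = 0.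
Proof. by move=> h; apply: nrm2_eq0; rewrite -sqr_ipnorm h expr0n. Qed.

Lemma ipnormN x : ipnorm ip (- x) = ipnorm ip x.
Proof. by rewrite /ipnorm ipNl ipNr opprK. Qed.

Lemma ipnormB x y : ipnorm ip (x - y) = ipnorm ip (y - x).
Proof. by rewrite -ipnormN opprB. Qed.

Lemma nrm2B x y : nrm2 (x - y) = nrm2 (y - x).
Proof. by rewrite /nrm2 -opprB ipNl ipNr opprK. Qed.

Definition n2c (z : R[i]) := complex.Re z ^+ 2 + complex.Im z ^+ 2.

Lemma n2c_ge0 z : 0 <= n2c z.
Proof. by rewrite addr_ge0 ?sqr_ge0. Qed.

Lemma n2cE z : z * conjc z = (n2c z)%:C.
Proof.
case: z => a b; rewrite /n2c /=; apply/eqP; rewrite eq_complex /=; apply/andP; split; apply/eqP; ring.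
Qed.

Lemma n2cJ z : n2c (conjc z) = n2c z.
Proof. by case: z => a b; rewrite /n2c /= sqrrN. Qed.

Lemma CS x y : n2c (ip y x) <= nrm2 x * nrm2 y.
Proof.
have [y0|] := eqVneq (nrm2 y) 0.
  have -> : y = 0 := nrm2_eq0 y0.
  by rewrite ip0l /nrm2 ip0r mulr0 /n2c /= expr0n addr0.
move=> ny0; have ay : 0 < nrm2 y by rewrite lt_neqAle eq_sym ny0 nrm2_ge0.
set a := nrm2 y; set b := ip y x.
pose w := a%:C *: x - b *: y.
have hw : ip w w = a%:C * (a%:C * (nrm2 x)%:C - b * conjc b).
  rewrite /w !ipBl !ipBr !ipZl !ipZr conjc_real !ipxx -/a.
  rewrite [ip x y]ipC -/b; ring.
have := ip_ge0 H w; rewrite hw pmulr_rge0 ?ltcR // subr_ge0 n2cE -rmorphM lecR.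
by rewrite mulrC.
Qed.

Lemma Re_le_n2c z : complex.Re z <= Num.sqrt (n2c z).
Proof.
apply: le_trans (ler_norm (complex.Re z)) _.
by rewrite -sqrtr_sqr ler_sqrt ?n2c_ge0 // /n2c lerDl sqr_ge0.
Qed.

Lemma Re_ip_le x y : complex.Re (ip y x) <= ipnorm ip x * ipnorm ip y.
Proof.
apply: (le_trans (Re_le_n2c _)); rewrite /ipnorm -sqrtrM ?nrm2_ge0 //.
by rewrite ler_sqrt ?mulr_ge0 ?nrm2_ge0 // CS.
Qed.

Lemma ipnormD x y : ipnorm ip (x + y) <= ipnorm ip x + ipnorm ip y.
Proof.
rewrite -[X in _ <= X]ger0_norm ?addr_ge0 ?ipnorm_ge0 // -sqrtr_sqr.
rewrite [X in X <= _]/ipnorm ler_sqrt ?sqr_ge0 //.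
rewrite sqrrD !sqr_ipnorm /nrm2 ipDl !ipDr !raddfD /=.
have h1 := Re_ip_le y x; have h2 := Re_ip_le x y.
rewrite -/(nrm2 x) -/(nrm2 y); lra.
Qed.

Lemma ipnorm_sum (I : Type) (r : seq I) (P : pred I) (f : I -> V) :
  ipnorm ip (\sum_(i <- r | P i) f i) <= \sum_(i <- r | P i) ipnorm ip (f i).
Proof.
elim: r => [|j r IH]; first by rewrite !big_nil ipnorm0.
rewrite !big_cons; case: (P j) => //.
by apply: (le_trans (ipnormD _ _)); rewrite lerD2l.
Qed.

Lemma ipnorm_lt x eps : 0 < eps -> (ipnorm ip x < eps) = (nrm2 x < eps ^+ 2).
Proof.
move=> e0; rewrite -sqr_ipnorm ltr_pXn2r // nnegrE ?ipnorm_ge0 ?ltW //.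
Qed.

Lemma n2c_eq0 z : n2c z = 0 -> z = 0.
Proof.
move/eqP; rewrite /n2c paddr_eq0 ?sqr_ge0 // !sqrf_eq0 => /andP[/eqP h1 /eqP h2].
by apply/eqP; rewrite eq_complex h1 h2 /= !eqxx.
Qed.

Variable u : nat -> V.
Hypothesis hu : complete_ONS ip u.
Variable y : V.

Let c l := ip (u l) y.
Let s N := \sum_(0 <= l < N) c l *: u l.
Let T N := \sum_(0 <= l < N) n2c (c l).

Lemma ip_u_s m N : ip (u m) (s N) = (m < N)%N%:R * c m.
Proof.
rewrite /s ip_sumr; under eq_bigr do rewrite ipZr (proj1 hu) mulrC.
by rewrite sum_delta.
Qed.

Lemma ip_s_y N : ip (s N) y = (T N)%:C.
Proof.
rewrite /s /T ip_suml rmorph_sum; apply: eq_bigr => l _.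
by rewrite ipZl -/(c l) mulrC n2cE.
Qed.

Lemma ip_s_s N M : (M <= N)%N -> ip (s N) (s M) = (T M)%:C /\ ip (s M) (s N) = (T M)%:C.
Proof.
move=> MN; split.
  rewrite {1}/s ip_suml (big_cat_nat (leq0n M) MN) /= [X in _ + X](_ : _ = 0) ?addr0.
    rewrite /T rmorph_sum; apply: eq_big_nat => l /andP[_ hl].
    by rewrite ipZl ip_u_s hl mul1r mulrC n2cE.
  rewrite big_nat big1 // => l /andP[hl _].
  by rewrite ipZl ip_u_s ltnNge hl mul0r mulr0.
rewrite {1}/s ip_suml /T rmorph_sum; apply: eq_big_nat => l /andP[_ hl].
by rewrite ipZl ip_u_s (leq_trans hl MN) mul1r mulrC n2cE.
Qed.

Lemma T_ge0 N : 0 <= T N.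
Proof. by apply: sumr_ge0 => l _; apply: n2c_ge0. Qed.

Lemma nrm2_ys N : nrm2 (y - s N) = nrm2 y - T N.
Proof.
apply: complexI; rewrite -ipxx // ipBl !ipBr ip_s_y [ip y (s N)]ipC ip_s_y.
have [-> _] := ip_s_s (leqnn N); rewrite conjc_real ipxx //.
by rewrite rmorphB; ring.
Qed.

Lemma bessel N : T N <= nrm2 y.
Proof. by rewrite -subr_ge0 -nrm2_ys nrm2_ge0. Qed.

Lemma nrm2_ss N M : (M <= N)%N -> nrm2 (s N - s M) = T N - T M.
Proof.
move=> MN; apply: complexI; rewrite -ipxx // ipBl !ipBr.
have [-> ->] := ip_s_s MN; have [-> _] := ip_s_s (leqnn N); have [-> _] := ip_s_s (leqnn M).
by rewrite rmorphB; ring.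
Qed.

Lemma parseval eps : 0 < eps -> exists N, nrm2 y - eps < T N.
Proof.
move=> e0.
have Tinc n : T n <= T n.+1 by rewrite /T big_nat_recr //= lerDl n2c_ge0.
have [tau [Tt Tcv]] := mono_cvg Tinc bessel.
have sC : ip_cauchy ip s.
  move=> d d0; have [K hK] := Tcv _ (exprn_gt0 2 d0).
  have key m n : (K <= n)%N -> (n <= m)%N -> ipnorm ip (s m - s n) < d.
    move=> Kn nm; rewrite ipnorm_lt // nrm2_ss //.
    have := hK n Kn; have := Tt m; lra.
  exists K => m n Km Kn; case: (leqP n m) => nm; first exact: key.
  by rewrite ipnormB; apply: key => //; exact: ltnW.
have [z hz] := ip_complete H sC.
have yz : y = z.
  apply/eqP; rewrite -subr_eq0; apply/eqP; apply: (proj2 hu) => m.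
  apply: n2c_eq0; apply/eqP; rewrite eq_le n2c_ge0 andbT; apply: lt_all_le0 => d d0.
  have sd0 : 0 < Num.sqrt d by rewrite sqrtr_gt0.
  have [N hN] := hz _ sd0.
  pose N' := maxn N m.+1.
  have h1 := hN N' (leq_maxl _ _).
  have e : ip (u m) (y - z) = ip (u m) (s N' - z).
    by rewrite !ipBr ip_u_s (leq_trans (leqnn m.+1) (leq_maxr _ _)) mul1r.
  rewrite e; apply: le_lt_trans (CS _ _) _.
  rewrite [nrm2 (u m)]/nrm2 (proj1 hu) eqxx /= mulr1.
  by move: h1; rewrite ipnorm_lt // sqr_sqrtr // ltW.
have sp : 0 < Num.sqrt eps by rewrite sqrtr_gt0.
have [N hN] := hz _ sp; exists N.
have := hN N (leqnn N); rewrite ipnorm_lt // sqr_sqrtr ?ltW // -yz nrm2B nrm2_ys.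
lra.
Qed.

End IP.



Section Geo.
Variable R : realType.
Definition w (n : nat) : R := ((2 ^ n)%N%:R)^-1.

Lemma w_gt0 n : 0 < w n.
Proof. by rewrite /w invr_gt0 ltr0n expn_gt0. Qed.

Lemma wS n : w n.+1 = w n / 2.
Proof. by rewrite /w expnS natrM invfM mulrC. Qed.

Lemma geo_sum n k : \sum_(n <= i < n + k) w i = 2 * (w n - w (n + k)).
Proof.
elim: k => [|k IH]; first by rewrite addn0 big_geq // subrr mulr0.
rewrite addnS big_nat_recr /= ?leq_addr // IH wS; field; by [].
Qed.

Lemma geo_le n m : \sum_(n <= i < m) w i <= 2 * w n.
Proof.
case: (leqP n m) => nm.
  have := geo_sum n (m - n); rewrite (subnKC nm) => ->.
  by rewrite ler_pM2l ?ltr0n // gerBl ltW ?w_gt0.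
rewrite big_geq; last exact: ltnW.
by rewrite mulr_ge0 ?ler0n ?ltW ?w_gt0.
Qed.
Lemma w_le n m : (n <= m)%N -> w m <= w n.
Proof.
move=> nm; rewrite /w lef_pV2 ?posrE ?ltr0n ?expn_gt0 ?ler_nat ?leq_exp2l; by [].
Qed.

Lemma w_small eps : 0 < eps -> exists n, forall m, (n <= m)%N -> 2 * w m < eps.
Proof.
move=> e0; have h := archi_boundP (ltW (divr_gt0 (ltr0n R 2) e0)).
exists (Num.Def.archi_bound (2 / eps)) => m hm.
have hw : 2 * w m <= 2 * w (Num.Def.archi_bound (2 / eps)) :> R.
  by apply: ler_wpM2l; [exact: ler0n | exact: w_le].
apply: le_lt_trans hw _.
rewrite /w ltr_pdivrMr; last by rewrite ltr0n expn_gt0.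
rewrite -ltr_pdivrMl; last exact: e0.
rewrite mulrC. apply: lt_trans h _; rewrite ltr_nat; exact: ltn_expl.
Qed.
End Geo.

Lemma sub_sum (R : realType) p m n (f : nat -> R) : (p <= m)%N -> (m <= n)%N ->
  (forall i, 0 <= f i) -> \sum_(p <= i < m) f i <= \sum_(p <= i < n) f i.
Proof.
move=> pm mn hf; rewrite (big_cat_nat pm mn) /= lerDl.
by apply: sumr_ge0 => i _; exact: hf.
Qed.


Section Lin.
Variables (R : realType) (F : lmodType R[i]) (D : F -> Prop).
Hypothesis HD : is_subspace D.

Lemma D0 : D 0. Proof. exact: HD.1. Qed.
Lemma DD x y : D x -> D y -> D (x + y).
Proof. by move=> hx hy; have := HD.2 1 x y hx hy; rewrite scale1r. Qed.
Lemma DZ c x : D x -> D (c *: x).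
Proof. by move=> hx; have := HD.2 c x 0 hx D0; rewrite addr0. Qed.
Lemma Dsum (I : Type) (r : seq I) (v : I -> F) :
  (forall i, D (v i)) -> D (\sum_(i <- r) v i).
Proof.
move=> h; elim: r => [|j r IH]; first by rewrite big_nil; exact: D0.
by rewrite big_cons; apply: DD.
Qed.

Variable T : F -> F.
Hypothesis HT : linear_on D T.

Lemma lin0 : T 0 = 0.
Proof.
have := HT 1 D0 D0; rewrite scale1r addr0 scale1r => h.
by apply/(addrI (T 0)); rewrite addr0 -h.
Qed.
Lemma linD x y : D x -> D y -> T (x + y) = T x + T y.
Proof. have _ := HD. by move=> hx hy; have := HT 1 hx hy; rewrite !scale1r. Qed.
Lemma linZ c x : D x -> T (c *: x) = c *: T x.
Proof. by move=> hx; have := HT c hx D0; rewrite !addr0 lin0 addr0. Qed.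
Lemma linsum (I : Type) (r : seq I) (v : I -> F) :
  (forall i, D (v i)) -> T (\sum_(i <- r) v i) = \sum_(i <- r) T (v i).
Proof.
move=> h; elim: r => [|j r IH]; first by rewrite !big_nil lin0.
by rewrite !big_cons linD ?IH //; apply: Dsum.
Qed.
End Lin.

Lemma linB (R : realType) (F W : lmodType R[i]) (P : F -> Prop) (T : F -> W) x y :
  linear_on P T -> P x -> P y -> T (x - y) = T x - T y.
Proof.
move=> h hx hy; have := h (-1) y x hy hx.
by rewrite !scaleN1r addrC [- T y + _]addrC.
Qed.

Section Span.
Variables (R : realType) (F : lmodType R[i]) (S : F -> Prop).

Lemma span0 : in_span S 0.
Proof. by exists [::]; split => //; rewrite big_nil. Qed.
Lemma span_gen x : S x -> in_span S x.
Proof.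
move=> h; exists [:: (1, x)]; split; last by rewrite big_seq1 scale1r.
by move=> p; rewrite inE => /eqP ->.
Qed.
Lemma spanD x y : in_span S x -> in_span S y -> in_span S (x + y).
Proof.
move=> [s1 [h1 ->]] [s2 [h2 ->]]; exists (s1 ++ s2); split; last by rewrite big_cat.
by move=> p; rewrite mem_cat => /orP[/h1|/h2].
Qed.
Lemma spanZ c x : in_span S x -> in_span S (c *: x).
Proof.
move=> [s [h ->]]; exists [seq (c * p.1, p.2) | p <- s]; split.
  by move=> p /mapP[q /h hq ->].
by rewrite big_map scaler_sumr; apply: eq_bigr => p _; rewrite scalerA.
Qed.
Lemma span_sum (I : Type) (r : seq I) (v : I -> F) :
  (forall i, in_span S (v i)) -> in_span S (\sum_(i <- r) v i).
Proof.
move=> h; elim: r => [|j r IH]; first by rewrite big_nil; exact: span0.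
by rewrite big_cons; apply: spanD.
Qed.
End Span.

Lemma realCM (R : realType) (x y : R) : (x * y)%:C = x%:C * y%:C.
Proof. by apply/eqP; rewrite eq_complex /= !mulr0 !mul0r subr0 addr0 !eqxx. Qed.
Lemma realCD (R : realType) (x y : R) : (x + y)%:C = x%:C + y%:C.
Proof. by apply/eqP; rewrite eq_complex /= addr0 !eqxx. Qed.
Lemma realCsum (R : realType) (I : Type) (r : seq I) (f : I -> R) :
  (\sum_(i <- r) f i)%:C = \sum_(i <- r) (f i)%:C.
Proof.
elim: r => [|j r IH]; first by rewrite !big_nil.
by rewrite !big_cons realCD IH.
Qed.

Lemma realC2 (R : realType) : (2 : R)%:C = 2.
Proof. apply/eqP; rewrite eq_complex /=; apply/andP; split; apply/eqP; [by rewrite -mulr2n|by rewrite addr0]. Qed.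

Lemma conj_cf (R : realType) (t : R) (z : R[i]) : conjc (t%:C * conjc z) = t%:C * z.
Proof. by case: z => x y /=; congr (_ +i* _); ring. Qed.

Lemma addB4 (V : zmodType) (x y z w : V) : (x + y) - (z + w) = (x - z) + (y - w).
Proof. by rewrite opprD addrACA. Qed.

Section Main.
Variables (R : realType) (L F : lmodType R[i]).
Variables (ipL : L -> L -> R[i]) (ipF : F -> F -> R[i]) (J : L -> L).
Variables (D : F -> Prop) (a ad : L -> F -> F) (Omega : F) (A : L -> L) (e : nat -> L).
Hypotheses (HL : is_hilbert ipL) (HJ : is_conjugation ipL J) (HF : is_hilbert ipF)
  (HK : is_fock_rep ipL ipF J a ad Omega D) (HA : bounded_op ipL A)
  (HS : is_symmetric ipL J A) (He : complete_ONS ipL e).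

Lemma JJ x : J (J x) = x. Proof. exact: HJ.2.1. Qed.
Lemma ipJ f g : ipL (J f) (J g) = ipL g f. Proof. exact: HJ.2.2. Qed.
Lemma ipee i j : ipL (e i) (e j) = (i == j)%:R. Proof. exact: He.1. Qed.

Definition alpha k l := ipL (J (A (e k))) (e l).

Lemma alphaE k l : alpha k l = ipL (J (e l)) (A (e k)).
Proof. by rewrite /alpha -{1}(JJ (e l)) ipJ. Qed.

Lemma alpha_sym k l : alpha k l = alpha l k.
Proof. by rewrite alphaE ipC // (HS (e k) (J (e l))) /= JJ -ipC. Qed.

Lemma Je_ONS : complete_ONS ipL (fun l => J (e l)).
Proof.
split; first by move=> i j; rewrite ipJ ipee eq_sym.
move=> f hf; rewrite -(JJ f).
have -> : J f = 0.
  apply: He.2 => j; rewrite ipC // -{1}(JJ (e j)) ipJ.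
  by rewrite hf conjc0.
have := HJ.1 1 0 0; rewrite scale1r addr0 rmorph1 scale1r => h.
by apply/(addrI (J 0)); rewrite addr0 -h.
Qed.

Lemma A_bound : exists K : R, 0 <= K /\ forall k, nrm2 ipL (A (e k)) <= K.
Proof.
have [_ [K0 hK]] := HA.
have n1 k : ipnorm ipL (e k) = 1 by rewrite /ipnorm ipee eqxx /= sqrtr1.
have hk k : ipnorm ipL (A (e k)) <= K0 by have := hK (e k) I; rewrite n1 mulr1.
have K00 : 0 <= K0 by apply: le_trans (hk 0%N); apply: ipnorm_ge0.
exists (K0 ^+ 2); split; first by rewrite sqr_ge0.
move=> k; rewrite -sqr_ipnorm //; rewrite ler_pXn2r // nnegrE ?ipnorm_ge0 //.
Qed.

Lemma row_bessel k N : \sum_(0 <= l < N) n2c (alpha k l) <= nrm2 ipL (A (e k)).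
Proof.
have := bessel HL Je_ONS (A (e k)) N.
by under eq_bigr do rewrite -alphaE.
Qed.

Lemma row_parseval k eps : 0 < eps ->
  exists N, nrm2 ipL (A (e k)) - eps < \sum_(0 <= l < N) n2c (alpha k l).
Proof.
move=> e0; have [N hN] := parseval HL Je_ONS (A (e k)) e0; exists N.
by move: hN; under eq_bigr do rewrite -alphaE.
Qed.

Let DO : D Omega := Omega_D HK.
Let HD := D_sub HK.
Definition phi l := ad (e l) Omega.
Definition psi k l := ad (e k) (phi l).

Lemma D_phi l : D (phi l). Proof. exact: (D_ad HK _ DO). Qed.
Lemma D_psi k l : D (psi k l). Proof. exact: (D_ad HK _ (D_phi l)). Qed.

Lemma a_phi j l : a (J (e j)) (phi l) = (j == l)%:R *: Omega.
Proof.
have := ccr_aad HK (J (e j)) (e l) DO; rewrite (a_Omega HK) (lin0 HD (ad_linx HK _)).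
by rewrite subr0 JJ ipee.
Qed.

Lemma a_psi j k l : a (J (e j)) (psi k l) = (j == k)%:R *: phi l + (j == l)%:R *: phi k.
Proof.
have := ccr_aad HK (J (e j)) (e k) (D_phi l); rewrite a_phi JJ ipee.
rewrite (linZ HD (ad_linx HK _)) // => /eqP; rewrite subr_eq => /eqP ->.
by rewrite addrC.
Qed.

Lemma aA_phi j l : a (A (e j)) (phi l) = alpha j l *: Omega.
Proof.
have := ccr_aad HK (A (e j)) (e l) DO; rewrite (a_Omega HK) (lin0 HD (ad_linx HK _)).
by rewrite subr0.
Qed.

Lemma DeltaE M x : DeltaM J a A e M x = \sum_(0 <= j < M) a (A (e j)) (a (J (e j)) x).
Proof. by rewrite /DeltaM big_mkord. Qed.

Lemma Delta_psi M k l :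
  DeltaM J a A e M (psi k l) = (((k < M)%N%:R + (l < M)%N%:R) * alpha k l) *: Omega.
Proof.
rewrite DeltaE.
under eq_bigr => j _.
  rewrite a_psi (linD HD (a_linx HK _)); try by apply: (DZ HD); apply: D_phi.
  rewrite !(linZ HD (a_linx HK _)); try exact: D_phi.
  rewrite !aA_phi !scalerA -scalerDl.
  over.
rewrite -scaler_suml big_split /=.
under eq_bigr => i _ do rewrite (eq_sym i k).
under [X in _ + X]eq_bigr => i _ do rewrite (eq_sym i l).
rewrite !sum_delta /= [alpha l k]alpha_sym; congr (_ *: _); ring.
Qed.

Lemma ad_adj k x z : D x -> D z -> ipF (ad (e k) x) z = ipF x (a (J (e k)) z).
Proof.
move=> hx hz; have := a_adj HK (J (e k)) hz hx; rewrite JJ => h.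
by rewrite (ipC HF) -h -(ipC HF).
Qed.

Lemma ip_phi l n : ipF (phi l) (phi n) = (l == n)%:R.
Proof.
rewrite /phi ad_adj //; last exact: D_phi.
by rewrite a_phi (ipZr HF) (Omega_unit HK) mulr1.
Qed.

Lemma ip_psi k l m n : ipF (psi k l) (psi m n) =
  (k == m)%:R * (l == n)%:R + (k == n)%:R * (l == m)%:R.
Proof.
rewrite {1}/psi ad_adj; [|exact: D_phi|exact: D_psi].
rewrite a_psi (ipDr HF) !(ipZr HF) !ip_phi.
by rewrite mulrC [(k == n)%:R * _]mulrC.
Qed.

Definition mass p q := \sum_(p <= k < q) \sum_(p <= l < q) n2c (alpha k l).
Definition cf (t : R) k l := t%:C * conjc (alpha k l).
Definition Xb p q t := \sum_(p <= k < q) \sum_(p <= l < q) cf t k l *: psi k l.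

Lemma D_Xb p q t : D (Xb p q t).
Proof.
apply: (Dsum HD) => k; apply: (Dsum HD) => l; apply: (DZ HD); exact: D_psi.
Qed.

Definition S2 (y : F) := exists fs : seq L, size fs = 2%N /\ y = fockvec ad Omega fs.

Lemma span_Xb p q t : in_span S2 (Xb p q t).
Proof.
apply: span_sum => k; apply: span_sum => l; apply: spanZ; apply: span_gen.
by exists [:: e k; e l].
Qed.

Lemma Delta_sum M (I : Type) (r : seq I) (v : I -> F) : (forall i, D (v i)) ->
  DeltaM J a A e M (\sum_(i <- r) v i) = \sum_(i <- r) DeltaM J a A e M (v i).
Proof.
move=> hv; rewrite /DeltaM.
under eq_bigr => j _.
  rewrite (linsum HD (a_linx HK _)) // (linsum HD (a_linx HK _)); last first.
    by move=> i; apply: (D_a HK).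
  over.
by rewrite exchange_big.
Qed.

Lemma Delta_Z M c v : D v -> DeltaM J a A e M (c *: v) = c *: DeltaM J a A e M v.
Proof.
move=> hv; rewrite /DeltaM scaler_sumr; apply: eq_bigr => j _.
by rewrite (linZ HD (a_linx HK _)) // (linZ HD (a_linx HK _)) //; apply: (D_a HK).
Qed.

Lemma Delta_Xb M p q t : DeltaM J a A e M (Xb p q t) =
  (\sum_(p <= k < q) \sum_(p <= l < q)
     cf t k l * (((k < M)%N%:R + (l < M)%N%:R) * alpha k l)) *: Omega.
Proof.
rewrite /Xb Delta_sum; last first.
  by move=> k; apply: (Dsum HD) => l; apply: (DZ HD); exact: D_psi.
rewrite scaler_suml; apply: eq_bigr => k _.
rewrite Delta_sum; last by move=> l; apply: (DZ HD); exact: D_psi.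
rewrite scaler_suml; apply: eq_bigr => l _.
rewrite Delta_Z; last exact: D_psi.
by rewrite Delta_psi scalerA.
Qed.

Lemma cf_alpha t k l : cf t k l * alpha k l = (t * n2c (alpha k l))%:C.
Proof. by rewrite /cf realCM -n2cE; ring. Qed.

Lemma Delta_Xb_hi M p q t : (q <= M)%N ->
  DeltaM J a A e M (Xb p q t) = (2 * t * mass p q)%:C *: Omega.
Proof.
move=> qM; rewrite Delta_Xb /mass mulr_sumr realCsum; congr (_ *: _).
apply: eq_big_nat => k /andP[_ hk]; rewrite mulr_sumr realCsum.
apply: eq_big_nat => l /andP[_ hl].
rewrite (leq_trans hk qM) (leq_trans hl qM) mulrCA cf_alpha.
rewrite !realCM /= realC2; ring.
Qed.

Lemma Delta_Xb_lo M p q t : (M <= p)%N -> DeltaM J a A e M (Xb p q t) = 0.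
Proof.
move=> Mp; rewrite Delta_Xb big_nat big1 ?scale0r // => k /andP[hk _].
rewrite big_nat big1 // => l /andP[hl _].
by rewrite ltnNge (leq_trans Mp hk) ltnNge (leq_trans Mp hl) /= addr0 mul0r mulr0.
Qed.

Lemma sum2_delta p q k l (g : nat -> nat -> R[i]) : (p <= k < q)%N -> (p <= l < q)%N ->
  \sum_(p <= m < q) \sum_(p <= n < q)
     g m n * ((k == m)%:R * (l == n)%:R + (k == n)%:R * (l == m)%:R) = g k l + g l k.
Proof.
move=> hk hl.
have e1 m n : g m n * ((k == m)%:R * (l == n)%:R + (k == n)%:R * (l == m)%:R) =
   (k == m)%:R * ((l == n)%:R * g m n) + (l == m)%:R * ((k == n)%:R * g m n) by ring.
under eq_bigr => m _ do under eq_bigr => n _ do rewrite e1.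
under eq_bigr => m _ do rewrite big_split /= -!mulr_sumr !sum_delta hk hl !mul1r.
rewrite big_split /= !sum_delta hk hl !mul1r.
done.
Qed.

Lemma ip_Xb p q t : ipF (Xb p q t) (Xb p q t) = (2 * t ^+ 2 * mass p q)%:C.
Proof.
rewrite {1}/Xb (ip_suml HF) /mass mulr_sumr realCsum; apply: eq_big_nat => k hk.
rewrite (ip_suml HF) mulr_sumr realCsum; apply: eq_big_nat => l hl.
rewrite (ipZl HF) /Xb (ip_sumr HF).
under eq_bigr => m _ do rewrite (ip_sumr HF).
under eq_bigr => m _ do under eq_bigr => n _ do rewrite (ipZr HF) ip_psi.
rewrite sum2_delta // /cf alpha_sym conj_cf expr2 !realCM -n2cE realC2; ring.
Qed.

Lemma cl_span (S : F -> Prop) x : in_span S x -> in_closure ipF (in_span S) x.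
Proof. by move=> h eps e0; exists x; rewrite subrr (ipnorm0 HF). Qed.

Lemma cl_B (S : F -> Prop) y z : in_closure ipF (in_span S) y ->
  in_closure ipF (in_span S) z -> in_closure ipF (in_span S) (y - z).
Proof.
move=> hy hz eps e0; have e2 : 0 < eps / 2 by rewrite divr_gt0.
have [y' [sy ny]] := hy _ e2; have [z' [sz nz]] := hz _ e2.
exists (y' - z'); split; first by apply: spanD => //; rewrite -scaleN1r; apply: spanZ.
have -> : y - z - (y' - z') = (y - y') + - (z - z').
  by rewrite addB4; congr (_ + _); rewrite opprB opprK addrC.
apply: le_lt_trans (ipnormD HF _ _) _; rewrite ipnormN //.
by rewrite [eps]splitr ltrD.
Qed.

Lemma cl_lim (S : F -> Prop) (u : nat -> F) x : (forall n, in_span S (u n)) ->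
  ip_cvg_to ipF u x -> in_closure ipF (in_span S) x.
Proof.
move=> hu hx eps e0; have [N hN] := hx _ e0; exists (u N); split => //.
by rewrite ipnormB //; apply: hN.
Qed.

Notation P2 := (npart ipF ad Omega 2).

Lemma Delta_cont M : exists C, forall y z, P2 y -> P2 z ->
  ipnorm ipF (DeltaM J a A e M y - DeltaM J a A e M z) <= C * ipnorm ipF (y - z).
Proof.
elim: M => [|M [C hC]].
  by exists 0 => y z _ _; rewrite /DeltaM !big_ord0 subrr (ipnorm0 HF) mul0r.
have [lin1 [K1 hK1]] := a_bdd HK (J (e M)) 1.
have [lin2 [K2 hK2]] := a_bdd HK (A (e M)) 0.
exists (C + Num.max K2 0 * K1) => y z Py Pz.
rewrite /DeltaM !big_ord_recr /= -!/(DeltaM J a A e M _).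
have -> : DeltaM J a A e M y + a (A (e M)) (a (J (e M)) y) -
    (DeltaM J a A e M z + a (A (e M)) (a (J (e M)) z)) =
    (DeltaM J a A e M y - DeltaM J a A e M z) +
    (a (A (e M)) (a (J (e M)) y) - a (A (e M)) (a (J (e M)) z)) by apply: addB4.
apply: le_trans (ipnormD HF _ _) _; rewrite mulrDl lerD ?hC //.
rewrite -(linB lin2); try by apply: (a_npart HK).
rewrite -(linB lin1) //.
have Pyz : P2 (y - z) by apply: cl_B.
apply: le_trans (hK2 _ (a_npart HK _ Pyz)) _.
have hm : K2 <= Num.max K2 0 by rewrite le_max lexx.
apply: le_trans (ler_wpM2r (ipnorm_ge0 ipF _) hm) _.
rewrite -mulrA; apply: ler_wpM2l; first by rewrite le_max lexx orbT.
exact: hK1.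
Qed.

Definition Ssum N := \sum_(0 <= k < N) nrm2 ipL (A (e k)).

Lemma rows_approx N1 d : 0 < d -> exists Lr,
  Ssum N1 - d < \sum_(0 <= k < N1) \sum_(0 <= l < Lr) n2c (alpha k l).
Proof.
elim: N1 d => [|N1 IH] d d0.
  by exists 0%N; rewrite /Ssum !big_geq // sub0r oppr_lt0.
have d2 : 0 < d / 2 by rewrite divr_gt0 ?ltr0n.
have [L1 h1] := IH _ d2; have [L2 h2] := row_parseval N1 d2.
exists (maxn L1 L2); rewrite /Ssum !big_nat_recr //= -/(Ssum N1).
have g0 k l : 0 <= n2c (alpha k l) by apply: n2c_ge0.
have s1 : \sum_(0 <= k < N1) \sum_(0 <= l < L1) n2c (alpha k l) <=
          \sum_(0 <= k < N1) \sum_(0 <= l < maxn L1 L2) n2c (alpha k l).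
  by apply: ler_sum => k _; apply: sub_sum => //; rewrite leq_maxl.
have s2 : \sum_(0 <= l < L2) n2c (alpha N1 l) <=
          \sum_(0 <= l < maxn L1 L2) n2c (alpha N1 l).
  by apply: sub_sum => //; rewrite leq_maxr.
move: h1 h2 s1 s2; set u1 := \sum_(0 <= k < N1) _; set u2 := \sum_(0 <= l < L2) _.
set u3 := \sum_(0 <= k < N1) _; set u4 := \sum_(0 <= l < _) _.
move=> h1 h2 s1 s2.
have -> : d = d / 2 + d / 2 by rewrite -splitr.
lra.
Qed.

Lemma mass_split n N K : (forall k, nrm2 ipL (A (e k)) <= K) -> (n <= N)%N ->
  mass 0 N <= mass n N + 2 * n%:R * K.
Proof.
move=> hK nN.
set g := fun k l => n2c (alpha k l).
have g0 k l : 0 <= g k l by apply: n2c_ge0.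
have gs k l : g k l = g l k by rewrite /g alpha_sym.
have row k M : \sum_(0 <= l < M) g k l <= K.
  exact: le_trans (row_bessel k M) (hK k).
rewrite /mass (big_cat_nat (leq0n n) nN) /=.
rewrite [X in _ + X <= _](_ : _ = \sum_(n <= k < N) \sum_(0 <= l < n) g k l +
     \sum_(n <= k < N) \sum_(n <= l < N) g k l); last first.
  by rewrite -big_split /=; apply: eq_bigr => k _; rewrite (big_cat_nat (leq0n n) nN).
have b1 : \sum_(0 <= k < n) \sum_(0 <= l < N) g k l <= n%:R * K.
  apply: le_trans (ler_sum _ (fun k _ => row k N)) _.
  by rewrite sumr_const_nat subn0 mulr_natl.
have b2 : \sum_(n <= k < N) \sum_(0 <= l < n) g k l <= n%:R * K.
  apply: le_trans (_ : _ <= \sum_(0 <= k < N) \sum_(0 <= l < n) g k l) _.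
    rewrite [X in _ <= X](big_cat_nat (leq0n n) nN) /= lerDr.
    by apply: sumr_ge0 => k _; apply: sumr_ge0 => l _; exact: g0.
  rewrite exchange_big_nat /=.
  under eq_bigr => l _ do under eq_bigr => k _ do rewrite gs.
  apply: le_trans (ler_sum _ (fun l _ => row l N)) _.
  by rewrite sumr_const_nat subn0 mulr_natl.
set m1 := \sum_(0 <= k < n) _; set m2 := \sum_(n <= k < N) \sum_(0 <= l < n) _.
set m3 := \sum_(n <= k < N) \sum_(n <= l < N) _.
move: b1 b2; rewrite -/m1 -/m2 => b1 b2; lra.
Qed.

Lemma hs_or_hump : hilbert_schmidt ipL A \/
  (forall n B, exists n', (n < n')%N /\ B <= mass n n').
Proof.
have Sinc N : Ssum N <= Ssum N.+1.
  by rewrite /Ssum big_nat_recr //= lerDl; apply: nrm2_ge0.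
case: (classic (exists B, forall N, Ssum N <= B)) => [[B hB]|hnb].
  left; have [s [hs hcv]] := mono_cvg Sinc hB.
  exists e; split => //; exists s => eps e0; have [N hN] := hcv _ e0; exists N => M hM.
  have -> : \sum_(j < M) ipnorm ipL (A (e j)) ^+ 2 = Ssum M.
    by rewrite /Ssum big_mkord; apply: eq_bigr => j _; rewrite sqr_ipnorm.
  rewrite ler0_norm; last by rewrite subr_le0.
  have := hN M hM; lra.
right => n B.
have unb : forall B', exists N, B' < Ssum N.
  move=> B'; apply: NNPP => h; apply: hnb; exists B' => N; rewrite leNgt.
  by apply/negP => hN; apply: h; exists N.
have [K [K0 hK]] := A_bound.
set t := 2 * n%:R * K.
have [N1 hN1] := unb (B + t + 1).
have [Lr hLr] := rows_approx N1 ltr01.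
pose N' := maxn (maxn N1 Lr) n.+1.
have hN1' : (N1 <= N')%N by rewrite /N' !leq_max leqnn.
have hLr' : (Lr <= N')%N by rewrite /N' !leq_max leqnn orbT.
have hn' : (n < N')%N by rewrite /N' leq_max leqnn orbT.
exists N'; split => //.
have h1 : \sum_(0 <= k < N1) \sum_(0 <= l < Lr) n2c (alpha k l) <= mass 0 N'.
  apply: le_trans (_ : _ <= \sum_(0 <= k < N1) \sum_(0 <= l < N') n2c (alpha k l)) _.
    by apply: ler_sum => k _; apply: sub_sum => // l; apply: n2c_ge0.
  apply: sub_sum => // k; apply: sumr_ge0 => l _; apply: n2c_ge0.
have h2 := mass_split hK (ltnW hn').
move: hN1 hLr h1 h2; rewrite -/t.
set u := \sum_(0 <= k < N1) _; move=> *; lra.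
Qed.

Lemma count_lt j n : (j <= n)%N -> \sum_(0 <= i < n) (i < j)%N%:R = j%:R :> R[i].
Proof.
move=> jn; rewrite (big_cat_nat (leq0n j) jn) /= [X in _ + X](_ : _ = 0); last first.
  by rewrite big_nat big1 // => i /andP[hi _]; rewrite ltnNge hi.
rewrite addr0 (_ : \sum_(0 <= i < j) (i < j)%N%:R = \sum_(0 <= i < j) (1 : R[i])).
  by rewrite sumr_const_nat subn0.
by apply: eq_big_nat => i /andP[_ ->].
Qed.

Lemma no_hump :
  (forall x, P2 x -> exists l, ip_cvg_to ipF (fun M => DeltaM J a A e M x) l) ->
  (forall n B, exists n', (n < n')%N /\ B <= mass n n') -> False.
Proof.
move=> hDelta HB.
have [g hg] : exists g : nat -> R -> nat, forall n B, (n < g n B)%N /\ B <= mass n (g n B).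
  exists (fun n B => proj1_sig (constructive_indefinite_description _ (HB n B))).
  by move=> n B; exact: (proj2_sig (constructive_indefinite_description _ (HB n B))).
pose Bf i := 2 / (w R i) ^+ 2.
pose Nn := fix f i := if i is i'.+1 then g (f i') (Bf i') else 0%N.
have NS i : Nn i.+1 = g (Nn i) (Bf i) by [].
have Nlt i : (Nn i < Nn i.+1)%N by rewrite NS; exact: (hg _ _).1.
have Nmono : {homo Nn : i j / (i <= j)%N}.
  apply: homo_leq; [exact: leqnn | exact: leq_trans | move=> i; exact: ltnW (Nlt i)].
have Nge i : (i <= Nn i)%N.
  by elim: i => [|i IH] //; apply: leq_ltn_trans IH (Nlt i).
pose m i := mass (Nn i) (Nn i.+1).
have mB i : Bf i <= m i by rewrite /m NS; exact: (hg _ _).2.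
have Bf0 i : 0 < Bf i by rewrite /Bf divr_gt0 ?ltr0n ?exprn_gt0 ?w_gt0.
have m0 i : 0 < m i := lt_le_trans (Bf0 i) (mB i).
pose X i := Xb (Nn i) (Nn i.+1) (m i)^-1.
have DX i : D (X i) by apply: D_Xb.
have nX i : ipnorm ipF (X i) <= w R i.
  rewrite /ipnorm /X ip_Xb /=.
  have hw : w R i = Num.sqrt (w R i ^+ 2).
    by rewrite sqrtr_sqr ger0_norm; [|exact/ltW/w_gt0].
  rewrite [X in _ <= X]hw ler_sqrt; last exact: sqr_ge0.
  rewrite -/(m i).
  have := mB i; rewrite /Bf ler_pdivrMr ?exprn_gt0 ?w_gt0 // => hm.
  have mn0 : m i != 0 by apply: lt0r_neq0; apply: m0.
  have -> : 2 * (m i)^-1 ^+ 2 * m i = 2 / m i by field.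
  by rewrite ler_pdivrMr ?m0 // mulrC.
pose Sn n := \sum_(0 <= i < n) X i.
have key n p : (n <= p)%N -> ipnorm ipF (Sn p - Sn n) <= 2 * w R n.
  move=> np; rewrite /Sn (big_cat_nat (leq0n n) np) /= addrC addrK.
  apply: le_trans (ipnorm_sum HF _ _ _) _.
  apply: le_trans (geo_le R n p); apply: ler_sum => i _; exact: nX.
have sC : ip_cauchy ipF Sn.
  move=> eps e0; have [N hN] := w_small e0; exists N => p q hp hq.
  case: (leqP q p) => qp.
    exact: le_lt_trans (key _ _ qp) (hN _ hq).
  rewrite ipnormB //; exact: le_lt_trans (key _ _ (ltnW qp)) (hN _ hp).
have [x hx] := ip_complete HF sC.
have spS n : in_span S2 (Sn n) by apply: span_sum => i; apply: span_Xb.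
have Px : P2 x by apply: (cl_lim spS hx).
have DS n : D (Sn n) by apply: (Dsum HD) => i; apply: DX.
have PS n : P2 (Sn n) by apply: cl_span; apply: spS.
have DeltaX j i : DeltaM J a A e (Nn j) (X i) = ((i < j)%N%:R * 2) *: Omega.
  case: (ltnP i j) => ij.
    rewrite Delta_Xb_hi; last exact: Nmono.
    have mn0 : m i != 0 by apply: lt0r_neq0; apply: m0.
    rewrite -/(m i) (_ : 2 * (m i)^-1 * m i = 2); last by field.
    by rewrite realC2 mul1r.
  by rewrite Delta_Xb_lo ?Nmono // mul0r scale0r.
have DeltaS j n : (j <= n)%N -> DeltaM J a A e (Nn j) (Sn n) = (2 * j%:R) *: Omega.
  move=> jn; rewrite Delta_sum //; under eq_bigr do rewrite DeltaX.
  by rewrite -scaler_suml -mulr_suml count_lt // mulrC.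
have Dx j : DeltaM J a A e (Nn j) x = (2 * j%:R) *: Omega.
  have [C hC] := Delta_cont (Nn j).
  apply/eqP; rewrite -subr_eq0; apply/eqP; apply: (ipnorm_eq0 HF).
  apply/eqP; rewrite eq_le ipnorm_ge0 andbT; apply: lt_all_le0 => eps e0.
  pose C1 := Num.max C 0 + 1.
  have C10 : 0 < C1 by rewrite /C1 ltr_pwDr ?ltr01 // le_max lexx orbT.
  have CC1 : C <= C1 by rewrite /C1 ler_wpDr ?ler01 // le_max lexx.
  have [N hN] := hx (eps / C1) (divr_gt0 e0 C10).
  pose n := maxn N j.
  rewrite -(DeltaS j n) ?leq_maxr //.
  apply: le_lt_trans (hC _ _ Px (PS n)) _.
  have hn : ipnorm ipF (x - Sn n) < eps / C1 by rewrite ipnormB //; apply: hN; rewrite leq_maxl.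
  apply: le_lt_trans (ler_wpM2r (ipnorm_ge0 ipF _) CC1) _.
  by rewrite mulrC -ltr_pdivlMr.
have [l hl] := hDelta x Px.
have [N hN] := hl 1 ltr01.
have h1 := hN (Nn N) (Nge N).
have h2 := hN (Nn N.+1) (leq_trans (leqnSn N) (Nge N.+1)).
rewrite (Dx N) in h1; rewrite (Dx N.+1) in h2.
have e2 : (2 * N.+1%:R) *: Omega - (2 * N%:R) *: Omega = 2 *: Omega.
  by rewrite -scalerBl -addn1 natrD; congr (_ *: _); ring.
have h3 : ipnorm ipF (2 *: Omega) < 2.
  rewrite -e2.
  have -> : (2 * N.+1%:R) *: Omega - (2 * N%:R) *: Omega =
     ((2 * N.+1%:R) *: Omega - l) + (l - (2 * N%:R) *: Omega).
    by rewrite addrA addrNK.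
  apply: le_lt_trans (ipnormD HF _ _) _; rewrite [ipnorm ipF (l - _)]ipnormB //.
  have -> : 2 = 1 + 1 :> R by [].
  exact: ltrD h2 h1.
have n2 : ipnorm ipF (2 *: Omega) = 2.
  rewrite /ipnorm (ipZl HF) (ipZr HF) (Omega_unit HK) mulr1 -realC2 conjc_real.
  by rewrite -realCM /= -expr2 sqrtr_sqr ger0_norm ?ler0n.
by move: h3; rewrite n2 ltxx.
Qed.
End Main.

End Aux.
Import Aux.

Theorem proposition5p8
  (R : realType) (L F : lmodType R[i])
  (ipL : L -> L -> R[i]) (ipF : F -> F -> R[i]) (J : L -> L)
  (D : F -> Prop) (a ad : L -> F -> F) (Omega : F)
  (A : L -> L) (e : nat -> L) :
  is_hilbert ipL -> is_conjugation ipL J ->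
  is_hilbert ipF -> is_fock_rep ipL ipF J a ad Omega D ->
  bounded_op ipL A -> is_symmetric ipL J A ->
  complete_ONS ipL e ->
  (forall x : F, npart ipF ad Omega 2 x ->
     exists l : F, ip_cvg_to ipF (fun M => DeltaM J a A e M x) l) ->
  hilbert_schmidt ipL A.
Proof.
move=> HL HJ HF HK HA HS He hD.
case: (hs_or_hump HL HJ HA HS He) => // hb.
exfalso; exact: (no_hump HL HJ HF HK HS He hD hb).
Qed.
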